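(* Let $\mathcal{H},\mathcal{K}$ be complex Hilbert spaces and $(f_*,f^* ):(\mathsf{P}(\mathcal{H}),\mathsf{L}(\mathcal{H}),\bar e_{\mathcal{H}})\to(\mathsf{P}(\mathcal{K}),\mathsf{L}(\mathcal{K}),\bar e_{\mathcal{K}})$ a Chu morphism. Then $f_*$ is injective if and only if $f^*(f_*([\psi]))=[\psi]$ for every nonzero $\psi\in\mathcal{H}$ (where the ray $f_*([\psi])$ is regarded as an element of $\mathsf{L}(\mathcal{K})$ and $[\psi]$ as an element of $\mathsf{L}(\mathcal{H})$).
   Context: A Chu morphism $(X,A,e)\to(X',A',e')$ between Chu spaces over $[0,1]$ is a pair $(f_*:X\to X',f^*:A'\to A)$ with $e(x,f^*(a'))=e'(f_*(x),a')$ for all $x,a'$. For a complex Hilbert space $\mathcal{H}$: $\mathsf{L}(\mathcal{H})$ is the set of closed subspaces, $P_S$ the orthogonal projector onto $S$, $\mathsf{P}(\mathcal{H})\subseteq\mathsf{L}(\mathcal{H})$ the set of rays $[\psi]=\{\lambda\psi:\lambda\in\mathbb{C}\}$, $\psi\neq0$, and $\bar e_{\mathcal{H}}([\psi],S)=\|P_S\psi\|^2/\|\psi\|^2$. *)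

(* Defs.v *)
From mathcomp Require Import all_boot all_order all_algebra.
From mathcomp Require Import complex.
From mathcomp Require Import boolp classical_sets reals.
Set Implicit Arguments. Unset Strict Implicit. Unset Printing Implicit Defensive.
Import GRing.Theory Num.Theory.
Local Open Scope ring_scope.
Local Open Scope classical_set_scope.

Record is_hilbert (R : realType) (H : lmodType R[i]) (ip : H -> H -> R[i]) : Prop := {
  ip_conj : forall x y, ip y x = Num.conj (ip x y);
  ip_linear : forall (a : R[i]) x y z, ip (a *: x + y) z = a * ip x z + ip y z;
  ip_ge0 : forall x, 0 <= ip x x;
  ip_def : forall x, ip x x = 0 -> x = 0;
  ip_complete : forall u : nat -> H,
    (forall eps : R, 0 < eps -> exists N : nat, forall m n : nat, (N <= m)%N -> (N <= n)%N ->
        Num.sqrt (complex.Re (ip (u m - u n) (u m - u n))) < eps) ->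
    exists l : H, forall eps : R, 0 < eps -> exists N : nat, forall n : nat, (N <= n)%N ->
        Num.sqrt (complex.Re (ip (u n - l) (u n - l))) < eps
}.

Section Hilbert.
Variables (R : realType) (H : lmodType R[i]) (ip : H -> H -> R[i]).

Definition hnorm2 (x : H) : R := complex.Re (ip x x).
Definition hnorm (x : H) : R := Num.sqrt (hnorm2 x).

(* closed (linear) subspace: a linear subspace closed in the norm topology
   (sequential closedness, equivalent to closedness in a metric space) *)
Definition closed_subspace (S : set H) : Prop :=
  [/\ S 0,
      (forall (a : R[i]) x y, S x -> S y -> S (a *: x + y)) &
      (forall (u : nat -> H) (l : H), (forall n, S (u n)) ->
         (forall eps : R, 0 < eps -> exists N : nat, forall n : nat, (N <= n)%N ->
             hnorm (u n - l) < eps) -> S l)].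

Definition Lsp := {S : set H | closed_subspace S}.

Definition ray (psi : H) : set H := [set a *: psi | a in [set: R[i]]].

Definition Psp := {S : Lsp | exists psi : H, psi != 0 /\ sval S = ray psi}.

Definition proj (S : set H) (x : H) : H :=
  xget 0 [set p | S p /\ forall s, S s -> ip (x - p) s = 0].

Definition rep (x : Psp) : H :=
  xget 0 [set psi | psi != 0 /\ sval (sval x) = ray psi].

Definition ebar (x : Psp) (S : Lsp) : R :=
  hnorm2 (proj (sval S) (rep x)) / hnorm2 (rep x).

End Hilbert.

Definition chu_morphism (R : realType) (H K : lmodType R[i])
  (ipH : H -> H -> R[i]) (ipK : K -> K -> R[i])
  (fs : Psp ipH -> Psp ipK) (fu : Lsp ipK -> Lsp ipH) : Prop :=
  forall (x : Psp ipH) (a' : Lsp ipK), ebar x (fu a') = ebar (fs x) a'.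

(* Main.v *)
Require Import Defs.
From mathcomp Require Import all_boot all_order all_algebra.
From mathcomp Require Import complex.
From mathcomp Require Import boolp classical_sets reals.

Set Implicit Arguments. Unset Strict Implicit. Unset Printing Implicit Defensive.
Import Order.TTheory GRing.Theory Num.Theory.
Local Open Scope ring_scope.
Local Open Scope classical_set_scope.

Section Aux.
Variables (R : realType) (H : lmodType R[i]) (ip : H -> H -> R[i]).
Hypothesis hH : is_hilbert ip.

Lemma ip0l z : ip 0 z = 0.
Proof.
have h := ip_linear hH 1 0 0 z; rewrite scale1r addr0 mul1r in h.
have : ip 0 z + 0 = ip 0 z + ip 0 z by rewrite addr0 {1}h.
by move/addrI.
Qed.

Lemma ipDl x y z : ip (x + y) z = ip x z + ip y z.
Proof. by rewrite -{1}(scale1r x) (ip_linear hH) mul1r. Qed.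

Lemma ipZl a x z : ip (a *: x) z = a * ip x z.
Proof. by rewrite -[a *: x]addr0 (ip_linear hH) ip0l addr0. Qed.

Lemma ipNl x z : ip (- x) z = - ip x z.
Proof. by rewrite -scaleN1r ipZl mulN1r. Qed.

Lemma ipDr x y z : ip z (x + y) = ip z x + ip z y.
Proof. by rewrite (ip_conj hH (x + y) z) (ip_conj hH x z) (ip_conj hH y z) ipDl rmorphD. Qed.

Lemma ipZr a x z : ip z (a *: x) = Num.conj a * ip z x.
Proof. by rewrite (ip_conj hH (a *: x) z) (ip_conj hH x z) ipZl rmorphM. Qed.

Lemma ipNr x z : ip z (- x) = - ip z x.
Proof. by rewrite -scaleN1r ipZr rmorphN rmorph1 mulN1r. Qed.

Lemma ReD (a b : R[i]) : complex.Re (a + b) = complex.Re a + complex.Re b.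
Proof. by case: a; case: b. Qed.

Lemma ge0_Re0 (z : R[i]) : 0 <= z -> complex.Re z = 0 -> z = 0.
Proof.
rewrite lecE; case: z => a b /= /andP[/eqP hb _] ha.
by rewrite hb ha.
Qed.

Lemma Re_ge0 (z : R[i]) : 0 <= z -> 0 <= complex.Re z.
Proof. by rewrite lecE => /andP[]. Qed.

Lemma hnorm2_ge0 x : 0 <= hnorm2 ip x.
Proof. exact: Re_ge0 (ip_ge0 hH x). Qed.

Lemma hnorm2_eq0 x : hnorm2 ip x = 0 -> x = 0.
Proof. by move=> h; apply: (ip_def hH); apply: ge0_Re0 (ip_ge0 hH x) h. Qed.

Lemma hnorm2_neq0 x : x != 0 -> hnorm2 ip x != 0.
Proof. by move=> nz; apply/eqP => /hnorm2_eq0 h; rewrite h eqxx in nz. Qed.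

Lemma pythag u w : ip u w = 0 ->
  hnorm2 ip (u + w) = hnorm2 ip u + hnorm2 ip w.
Proof.
move=> h; rewrite /hnorm2 ipDl !ipDr h (ip_conj hH u w) h rmorph0 addr0 add0r.
by rewrite ReD.
Qed.

Lemma hnorm2N x : hnorm2 ip (- x) = hnorm2 ip x.
Proof. by rewrite /hnorm2 ipNl ipNr opprK. Qed.

Lemma hnorm2_0 : hnorm2 ip 0 = 0.
Proof. by rewrite /hnorm2 ip0l. Qed.

Lemma proj_in S psi : closed_subspace ip S -> S psi -> proj ip S psi = psi.
Proof.
case=> S0 Slin _ Spsi; rewrite /proj.
set P := [set p | S p /\ forall s, S s -> ip (psi - p) s = 0].
have Ppsi : P psi by split => // s _; rewrite subrr ip0l.
have [Sp Op] := xgetI 0 Ppsi.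
set p := xget 0 P in Sp Op *.
have Sw : S (psi - p) by rewrite addrC -scaleN1r; apply: Slin.
have := Op _ Sw => /(ip_def hH) /eqP; rewrite subr_eq0 => /eqP ->.
done.
Qed.

Lemma proj_norm S psi : psi != 0 ->
  hnorm2 ip (proj ip S psi) = hnorm2 ip psi -> S psi.
Proof.
move=> nz; rewrite /proj.
set P := [set p | S p /\ forall s, S s -> ip (psi - p) s = 0].
have [[p0 Pp0]|nex] := pselect (exists p, P p); last first.
  rewrite xgetPN; last by move=> p Pp; apply: nex; exists p.
  by rewrite hnorm2_0 => /esym /eqP; rewrite (negbTE (hnorm2_neq0 nz)).
have [Sp Op] := xgetPex 0 (ex_intro _ p0 Pp0).
set p := xget 0 P in Sp Op *.
have := pythag (Op _ Sp); rewrite subrK => ->.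
move=> e; have : hnorm2 ip (psi - p) = 0 by apply: (addIr (hnorm2 ip p)); rewrite add0r -e.
move=> /hnorm2_eq0 /eqP.
by rewrite subr_eq0 => /eqP ->.
Qed.

Lemma rep_spec (x : Psp ip) : rep x != 0 /\ sval (sval x) = ray (rep x).
Proof.
rewrite /rep; have [psi [nz e]] := svalP x.
have ex : exists q, [set q : H | q != 0 /\ sval (sval x) = ray q] q by exists psi.
exact: (xgetPex 0 ex).
Qed.

Lemma ebar1 (x : Psp ip) (S : Lsp ip) :
  ebar x S = 1 <-> sval S (rep x).
Proof.
have [nz _] := rep_spec x.
split.
  by move/divr1_eq; apply: proj_norm.
by move=> h; rewrite /ebar proj_in //; [apply: divff; apply: hnorm2_neq0 | exact: svalP].
Qed.

Lemma ray_mem (v : H) : ray v v.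
Proof. by exists 1 => //; rewrite scale1r. Qed.

Lemma ray_eq (v w : H) : ray v w -> w != 0 -> ray w = ray v.
Proof.
case=> a _ <- nz.
have anz : a != 0 by apply: contraNneq nz => ->; rewrite scale0r.
apply/seteqP; split => z [b _ <-].
  by exists (b * a) => //; rewrite scalerA.
by exists (b / a) => //; rewrite scalerA divfK.
Qed.

Lemma ray_closed (v : H) : v != 0 -> closed_subspace ip (ray v).
Proof.
move=> nz; split.
- by exists 0 => //; rewrite scale0r.
- move=> a x y [b _ <-] [c _ <-]; exists (a * b + c) => //.
  by rewrite scalerDl scalerA.
move=> u l Su Hl.
have vv : ip v v != 0 by apply/eqP => /(ip_def hH) /eqP; rewrite (negbTE nz).
pose c := ip l v / ip v v.
pose w := l - c *: v.
have wv : ip w v = 0.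
  by rewrite /w ipDl ipNl ipZl /c divfK // subrr.
suff w0 : hnorm2 ip w = 0.
  exists c => //; apply/eqP; rewrite eq_sym -subr_eq0; apply/eqP.
  exact: hnorm2_eq0.
apply/eqP; rewrite eq_le hnorm2_ge0 andbT; rewrite leNgt; apply/negP => wpos.
have [N HN] := Hl (Num.sqrt (hnorm2 ip w)) ltac:(by rewrite sqrtr_gt0).
have := HN N (leqnn N); case: (Su N) => a _ eN.
have -> : u N - l = - w + (a - c) *: v.
  by rewrite -eN /w scalerBl opprB (addrC (c *: v - l)) addrA subrK.
rewrite /hnorm pythag; last first.
  by rewrite ipZr ipNl wv oppr0 mulr0.
rewrite hnorm2N; apply/negP; rewrite -leNgt ler_sqrt; last first.
  by rewrite addr_ge0 // hnorm2_ge0.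
by rewrite lerDl hnorm2_ge0.
Qed.

Definition mkP (v : H) (nz : v != 0) : Psp ip :=
  exist _ (exist _ (ray v) (ray_closed nz)) (ex_intro _ v (conj nz erefl)).

End Aux.

Lemma Lsp_eq (R : realType) (H : lmodType R[i]) (ip : H -> H -> R[i])
  (S T : Lsp ip) : sval S = sval T -> S = T.
Proof.
case: S => S hS; case: T => T hT /= e; subst T.
by rewrite (Prop_irrelevance hS hT).
Qed.

Lemma Psp_eq (R : realType) (H : lmodType R[i]) (ip : H -> H -> R[i])
  (x y : Psp ip) : sval (sval x) = sval (sval y) -> x = y.
Proof.
case: x => S hS; case: y => T hT /= e; have e' := Lsp_eq e; subst T.
by rewrite (Prop_irrelevance hS hT).
Qed.

Theorem proposition3p5 (R : realType)
  (H : lmodType R[i]) (ipH : H -> H -> R[i]) (hH : is_hilbert ipH)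
  (K : lmodType R[i]) (ipK : K -> K -> R[i]) (hK : is_hilbert ipK)
  (fs : Psp ipH -> Psp ipK) (fu : Lsp ipK -> Lsp ipH) :
  chu_morphism fs fu ->
  (injective fs <-> forall x : Psp ipH, fu (sval (fs x)) = sval x).
Proof.
move=> chu; split; last first.
  by move=> h x y e; apply: Psp_eq; rewrite -h e h.
move=> inj x.
have key : forall y, ebar y (fu (sval (fs x))) = 1 <-> y = x.
  move=> y; rewrite chu ebar1 //; have [nzy ey] := rep_spec (fs y).
  have [nzx ex] := rep_spec (fs x).
  split; last by move=> ->; rewrite ex; exact: ray_mem.
  rewrite ex => hr; apply: inj; apply: Psp_eq.
  by rewrite ey ex; apply: ray_eq.
have [nzp ep] := rep_spec x.
apply: Lsp_eq; rewrite ep.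
have cl : closed_subspace ipH (sval (fu (sval (fs x)))) by exact: svalP.
have [S0 Slin _] := cl.
have psiS : sval (fu (sval (fs x))) (rep x) by apply/(ebar1 hH)/key.
apply/seteqP; split => v; last first.
  by case=> a _ <-; rewrite -[a *: _]addr0; apply: Slin.
move=> Sv.
have [->|nzv] := eqVneq v 0; first by exists 0 => //; rewrite scale0r.
have : mkP hH nzv = x.
  apply/key/(ebar1 hH).
  have [_ ey] := rep_spec (mkP hH nzv).
  have : ray v (rep (mkP hH nzv)).
    have := ray_mem (rep (mkP hH nzv)); rewrite -ey; exact: id.
  by case=> a _ <-; rewrite -[a *: _]addr0; apply: Slin.
move=> e; rewrite -ep -e; exact: (ray_mem v).
Qed.
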